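(* Let $B$ be an integral $n\times n$ matrix with $B_{ij}\ge0$ and $B_{ii}>0$ for all $1\le i,j\le n$, and let $k$ be a field. Then there exist a finite dimensional triangular $k$-algebra $A$ (with respect to primitive orthogonal idempotents $e_1,\dots,e_n$) and a triangular $A$-$A$-bimodule $M$ such that $C_A=B_+$ and $C_M=B_-$. In particular $B=C_\Lambda$ for $\Lambda=A\ltimes DM$.
   Context: $A$ is triangular if $e_iAe_j=0$ for $j<i$ and $e_iAe_i\cong k$; a bimodule $M$ is triangular if $e_iMe_j=0$ for $j<i$. $DM=\operatorname{Hom}_k(M,k)$ and $\Lambda=A\ltimes DM$ is $A\oplus DM$ with $(a,\mu)(a',\mu')=(aa',a\mu'+\mu a')$, with idempotents $(e_i,0)$. Cartan matrices: $(C_A)_{ij}=\dim_ke_{n+1-j}Ae_{n+1-i}$, $(C_M)_{ij}=\dim_ke_{n+1-j}Me_{n+1-i}$, $(C_\Lambda)_{ij}=\dim_ke_{n+1-j}\Lambda e_{n+1-i}$. For a square matrix $B$: $(B_+)_{ij}=B_{ij}$ if $i<j$, $1$ if $i=j$, $0$ otherwise; $(B_-)_{ij}=B_{ji}$ if $i<j$, $B_{ii}-1$ if $i=j$, $0$ otherwise (so $B=B_++B_-^T$). *)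

(* Defs.v *)
From HB Require Import structures.
From mathcomp Require Import all_boot all_order all_algebra all_field.
Set Implicit Arguments. Unset Strict Implicit. Unset Printing Implicit Defensive.
Import Order.TTheory GRing.Theory Num.Theory.
Local Open Scope ring_scope.

(* A "fixed" span-of-image subspace: { f v | v in V } as a subspace,
   computed as the span of the images of a basis (f will always be linear). *)
Definition img_vs (K : fieldType) (U W : vectType K) (f : U -> W) : {vspace W} :=
  (<< map f (vbasis (fullv : {vspace U})) >>)%VS.

Definition cornerA (K : fieldType) (A : falgType K) (e e' : A) : {vspace A} :=
  img_vs (fun a : A => e * a * e').

Definition primitive_idem (K : fieldType) (A : falgType K) (e : A) : Prop :=
  [/\ e * e = e, e != 0 &
      forall f g : A, f * f = f -> g * g = g -> f * g = 0 -> g * f = 0 ->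
        e = f + g -> f = 0 \/ g = 0].

Definition complete_prim_orth_idem (K : fieldType) (A : falgType K) (n : nat)
    (e : 'I_n -> A) : Prop :=
  [/\ forall i, primitive_idem (e i),
      forall i j, i != j -> e i * e j = 0 &
      \sum_(i < n) e i = 1].

Definition triangular_alg (K : fieldType) (A : falgType K) (n : nat)
    (e : 'I_n -> A) : Prop :=
  (forall i j : 'I_n, (j < i)%N -> cornerA (e i) (e j) = 0%VS) /\
  (forall i : 'I_n, \dim (cornerA (e i) (e i)) = 1%N).

Record bimod_ax (K : fieldType) (A : falgType K) (M : vectType K)
    (la : A -> M -> M) (ra : M -> A -> M) : Prop := BimodAx {
  la_addl : forall a b m, la (a + b) m = la a m + la b m;
  la_addr : forall a m m', la a (m + m') = la a m + la a m';
  la_scalel : forall (c : K) a m, la (c *: a) m = c *: la a m;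
  la_scaler : forall (c : K) a m, la a (c *: m) = c *: la a m;
  la_one : forall m, la 1 m = m;
  la_mul : forall a b m, la (a * b) m = la a (la b m);
  ra_addl : forall m m' a, ra (m + m') a = ra m a + ra m' a;
  ra_addr : forall m a b, ra m (a + b) = ra m a + ra m b;
  ra_scalel : forall (c : K) m a, ra (c *: m) a = c *: ra m a;
  ra_scaler : forall (c : K) m a, ra m (c *: a) = c *: ra m a;
  ra_one : forall m, ra m 1 = m;
  ra_mul : forall m a b, ra m (a * b) = ra (ra m a) b;
  lr_comm : forall a m b, la a (ra m b) = ra (la a m) b
}.

Definition cornerM (K : fieldType) (A : falgType K) (M : vectType K)
    (la : A -> M -> M) (ra : M -> A -> M) (e e' : A) : {vspace M} :=
  img_vs (fun m : M => la e (ra m e')).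

Definition triangular_bimod (K : fieldType) (A : falgType K) (M : vectType K)
    (la : A -> M -> M) (ra : M -> A -> M) (n : nat) (e : 'I_n -> A) : Prop :=
  forall i j : 'I_n, (j < i)%N -> cornerM la ra (e i) (e j) = 0%VS.

(* Cartan matrices, indices shifted to 0..n-1: entry (i,j) is
   dim e_{n-1-j} X e_{n-1-i}  (i.e. rev_ord). *)
Definition cartanA (K : fieldType) (A : falgType K) (n : nat) (e : 'I_n -> A)
    : 'M[int]_n :=
  \matrix_(i < n, j < n) (\dim (cornerA (e (rev_ord j)) (e (rev_ord i))))%:Z.

Definition cartanM (K : fieldType) (A : falgType K) (M : vectType K)
    (la : A -> M -> M) (ra : M -> A -> M) (n : nat) (e : 'I_n -> A)
    : 'M[int]_n :=
  \matrix_(i < n, j < n)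
     (\dim (cornerM la ra (e (rev_ord j)) (e (rev_ord i))))%:Z.

Definition Bplus (n : nat) (B : 'M[int]_n) : 'M[int]_n :=
  \matrix_(i < n, j < n)
    (if (i < j)%N then B i j else if i == j then 1 else 0).

Definition Bminus (n : nat) (B : 'M[int]_n) : 'M[int]_n :=
  \matrix_(i < n, j < n)
    (if (i < j)%N then B j i else if i == j then B i i - 1 else 0).

(* Trivial extension Lambda = A |x DM, DM = Hom_k(M, k), as the k-vector space
   A * 'Hom(M, k^o) with multiplication
   (a, mu)(a', mu') = (a a', a mu' + mu a'), where
   (a mu')(m) = mu'(m a) and (mu a')(m) = mu(a' m). *)
Section TrivExt.
Variables (K : fieldType) (A : falgType K) (M : vectType K)
  (la : A -> M -> M) (ra : M -> A -> M).

Definition DM := 'Hom(M, K^o).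
Definition Lam := (A * DM)%type.

Definition lact_dual (a : A) (mu : DM) : DM := linfun (fun m : M => mu (ra m a)).
Definition ract_dual (mu : DM) (a : A) : DM := linfun (fun m : M => mu (la a m)).

Definition lam_mul (x y : Lam) : Lam :=
  (x.1 * y.1, lact_dual x.1 y.2 + ract_dual x.2 y.1).

Definition lam_idem (e : A) : Lam := (e, 0).

Definition cornerL (e e' : A) : {vspace Lam} :=
  img_vs (fun x : Lam => lam_mul (lam_mul (lam_idem e) x) (lam_idem e')).

Definition cartanL (n : nat) (e : 'I_n -> A) : 'M[int]_n :=
  \matrix_(i < n, j < n) (\dim (cornerL (e (rev_ord j)) (e (rev_ord i))))%:Z.
End TrivExt.

(* Submission.v *)
Require Import Defs.
From HB Require Import structures.
From mathcomp Require Import all_boot all_order all_algebra all_field.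
From mathcomp Require Import ring zify.
Set Implicit Arguments. Unset Strict Implicit. Unset Printing Implicit Defensive.
Import GRing.Theory Num.Theory.
Local Open Scope ring_scope.

Section Key.
Variable K : fieldType.

Definition mklin (U W : lmodType K) (f : U -> W) (H : linear f) : {linear U -> W} :=
  HB.pack f (GRing.isLinear.Build K U W *:%R f H).

Lemma linfunE' (U W : vectType K) (f : U -> W) :
  linear f -> forall v, linfun f v = f v.
Proof. by move=> H v; exact: (lfunE (mklin H) v). Qed.

Variables (V : vectType K) (I : finType) (b : I -> V) (c : I -> V -> K)
  (S : pred I) (f : V -> V).
Hypotheses (cb : forall k l, c k (b l) = (k == l)%:R)
  (clin : forall k, linear (c k : V -> K^o))
  (fE : forall v, f v = \sum_(k | S k) c k v *: b k).

Lemma flin : linear f.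
Proof.
move=> a u v; rewrite !fE scaler_sumr -big_split /=; apply: eq_bigr => k _.
by rewrite (clin k a u v) scalerDl scalerA.
Qed.

Lemma img_vsE : img_vs f = (linfun f @: fullv)%VS.
Proof.
rewrite /img_vs -[in RHS](span_basis (vbasisP fullv)) limg_span.
by apply: eq_span => v; rewrite (eq_map (linfunE' flin)).
Qed.

Lemma dim_img_coord : \dim (img_vs f) = #|S|.
Proof.
pose X0 := [seq b k | k <- enum S].
have eX : img_vs f = <<X0>>%VS.
  apply/eqP; rewrite eqEsubv; apply/andP; split.
    rewrite img_vsE; apply/subvP => y /memv_imgP [v _ ->].
    rewrite linfunE'; last exact: flin.
    rewrite fE; apply: memv_suml => k Sk; apply: memvZ; apply: memv_span.
    by apply: map_f; rewrite mem_enum.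
  apply/span_subvP => y /mapP [k]; rewrite mem_enum => Sk ->.
  have -> : b k = f (b k).
    rewrite fE (bigD1 k) //= cb eqxx scale1r big1 ?addr0 // => l /andP [_ lk].
    by rewrite cb (negbTE lk) scale0r.
  rewrite img_vsE -(linfunE' flin); exact: memv_img (memvf _).
rewrite eX.
pose cl k := @mklin V K^o (c k) (clin k).
pose X := [tuple b (enum_val (A:=S) i) | i < #|S|].
have -> : <<[seq b k | k <- enum S]>>%VS = <<X>>%VS.
  apply: eq_span => y; apply/mapP/mapP.
    move=> [k]; rewrite mem_enum => Sk ->; exists (enum_rank_in Sk k).
      exact: mem_enum.
    by rewrite enum_rankK_in.
  move=> [i _ ->]; exists (enum_val i) => //; rewrite mem_enum; exact: enum_valP.
have fX : free X.
  have Xi : forall i : 'I_#|S|, X`_i = b (enum_val i).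
    by move=> i; rewrite -(tnth_nth 0) tnth_mktuple.
  apply/freeP => co H j.
  have := congr1 (cl (enum_val j)) H.
  rewrite linear0 linear_sum (bigD1 j) // big1 ?addr0.
    rewrite linearZ Xi /= cb eqxx addr0 => <-; exact: (esym (mulr1 _)).
  move=> i ij; rewrite linearZ Xi /= cb.
  rewrite (inj_eq enum_val_inj) eq_sym (negbTE ij); exact: (mulr0 _).
by rewrite (eqP fX) size_tuple.
Qed.
End Key.

Section Alg.
Variables (K : fieldType) (n : nat) (Arr : finType) (src tgt : Arr -> 'I_n.+1).

Lemma scK (a v : K) : a *: (v : K^o) = a * v. Proof. by []. Qed.

Definition Aty := {ffun ('I_n.+1 + Arr) -> K^o}.
HB.instance Definition _ := Vector.on Aty.

Definition amul (x y : Aty) : Aty := [ffun k =>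
  match k with
  | inl i => x (inl i) * y (inl i)
  | inr a => x (inl (src a)) * y (inr a) + x (inr a) * y (inl (tgt a))
  end].
Definition aone : Aty := [ffun k => match k with inl _ => 1 | inr _ => 0 end].

Fact amulA : associative amul.
Proof. move=> x y z; apply/ffunP => [[i|a]]; rewrite !ffunE /=; ring. Qed.
Fact amul1l : left_id aone amul.
Proof. by move=> x; apply/ffunP => [[i|a]]; rewrite !ffunE /=; ring. Qed.
Fact amul1r : right_id aone amul.
Proof. by move=> x; apply/ffunP => [[i|a]]; rewrite !ffunE /=; ring. Qed.
Fact amulDl : left_distributive amul +%R.
Proof. by move=> x y z; apply/ffunP => [[i|a]]; rewrite !ffunE /=; ring. Qed.
Fact amulDr : right_distributive amul +%R.
Proof. by move=> x y z; apply/ffunP => [[i|a]]; rewrite !ffunE /=; ring. Qed.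
Fact aone_neq0 : aone != 0.
Proof. by apply/eqP => /ffunP /(_ (inl ord0)); rewrite !ffunE; apply/eqP; exact: oner_neq0. Qed.

HB.instance Definition _ := GRing.Zmodule_isNzRing.Build Aty
  amulA amul1l amul1r amulDl amulDr aone_neq0.

Fact ascaleAl (a : K) (x y : Aty) : a *: amul x y = amul (a *: x) y.
Proof. by apply/ffunP => [[i|k]]; rewrite !ffunE /= !scK; ring. Qed.
HB.instance Definition _ := GRing.Lmodule_isLalgebra.Build K Aty ascaleAl.
Fact ascaleAr (a : K) (x y : Aty) : a *: amul x y = amul x (a *: y).
Proof. by apply/ffunP => [[i|k]]; rewrite !ffunE /= !scK; ring. Qed.
HB.instance Definition _ := GRing.Lalgebra_isAlgebra.Build K Aty ascaleAr.
HB.instance Definition _ := Algebra_isFalgebra.Build K Aty.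

Lemma mulE (x y : Aty) : x * y = amul x y. Proof. by []. Qed.
Lemma oneE : (1 : Aty) = aone. Proof. by []. Qed.

Definition eid (p : 'I_n.+1) : Aty :=
  [ffun k => match k with inl i => (i == p)%:R | inr _ => 0 end].

Definition SA (p q : 'I_n.+1) (l : 'I_n.+1 + Arr) : bool :=
  match l with inl i => (i == p) && (i == q)
             | inr a => (src a == p) && (tgt a == q) end.

Lemma corner_pt p q (x : Aty) l :
  (eid p * x * eid q) l = if SA p q l then x l else 0.
Proof.
case: l => [i|a]; rewrite !mulE !ffunE /=.
  by case: (i == p); case: (i == q); rewrite /=; ring.
by case: (src a == p); case: (tgt a == q); rewrite /=; ring.
Qed.

Lemma sum_delta (I : finType) (S : pred I) (F : I -> K) l :
  \sum_(k | S k) F k * (l == k)%:R = if S l then F l else 0.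
Proof.
case: (boolP (S l)) => Sl.
  rewrite (bigD1 l) //= eqxx mulr1 big1 ?addr0 // => k /andP [_ kl].
  by rewrite eq_sym (negbTE kl) mulr0.
rewrite big1 // => k Sk; have -> : (l == k) = false.
  by apply/eqP => lk; move: Sl; rewrite lk Sk.
by rewrite mulr0.
Qed.

Definition dl (I : finType) (k : I) : {ffun I -> K^o} := [ffun l => (l == k)%:R].

Lemma ffun_expand (I : finType) (S : pred I) (x : {ffun I -> K^o}) :
  [ffun l => if S l then x l else 0] = \sum_(k | S k) x k *: dl k.
Proof.
apply/ffunP => l; rewrite sum_ffunE !ffunE -(sum_delta S x l).
by apply: eq_bigr => k _; rewrite !ffunE scK.
Qed.

Lemma cornerA_expand p q (x : Aty) :
  eid p * x * eid q = \sum_(k | SA p q k) x k *: (dl k : Aty).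
Proof.
rewrite -ffun_expand; apply/ffunP => l; by rewrite corner_pt ffunE.
Qed.

Lemma dimA p q : \dim (cornerA (eid p) (eid q)) = #|SA p q|.
Proof.
apply: (@dim_img_coord K Aty _ (fun k => dl k : Aty) (fun k (x : Aty) => x k)).
- by move=> k l; rewrite ffunE.
- by move=> k a u v; rewrite !ffunE.
- exact: cornerA_expand.
Qed.

Lemma card_sumpred (I1 I2 : finType) (P : pred (I1 + I2)) :
  #|P| = (#|[pred i | P (inl i)]| + #|[pred j | P (inr j)]|)%N.
Proof. by rewrite -!sum1_card big_sumType. Qed.

Lemma card_SA p q :
  #|SA p q| = ((p == q) + #|[pred a | (src a == p) && (tgt a == q)]|)%N.
Proof.
rewrite card_sumpred /=; congr (_ + _)%N.
case: (eqVneq p q) => [<-|pq].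
  by rewrite (@eq_card _ _ (pred1 p)) ?card1 // => i; rewrite !inE andbb.
rewrite (@eq_card _ _ pred0) ?card0 // => i; rewrite !inE.
by case: (i =P p) => // ->; rewrite (negbTE pq).
Qed.

Variables (Brr : finType) (u w : Brr -> 'I_n.+1).
Definition Mty := {ffun Brr -> K^o}.
Definition la (x : Aty) (m : Mty) : Mty := [ffun b => x (inl (u b)) * m b].
Definition ra (m : Mty) (x : Aty) : Mty := [ffun b => m b * x (inl (w b))].

Lemma bimod : bimod_ax la ra.
Proof.
by constructor; intros; apply/ffunP => z; rewrite ?mulE ?oneE !ffunE ?scK /=;
  rewrite ?ffunE ?scK /=; ring.
Qed.

Lemma dimM p q : \dim (cornerM la ra (eid p) (eid q)) =
  #|[pred b | (u b == p) && (w b == q)]|.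
Proof.
apply: (@dim_img_coord K Mty _ (fun k => dl k : Mty) (fun k (x : Mty) => x k)).
- by move=> k l; rewrite ffunE.
- by move=> k a x y; rewrite !ffunE.
- move=> m; rewrite -ffun_expand; apply/ffunP => b; rewrite !ffunE /=.
  by case: (u b == p); case: (w b == q); rewrite /=; ring.
Qed.

Lemma ra_lin (a : Aty) : linear (fun m : Mty => ra m a).
Proof. by move=> c x y; apply/ffunP => z; rewrite !ffunE ?scK; ring. Qed.
Lemma la_lin (a : Aty) : linear (fun m : Mty => la a m).
Proof. by move=> c x y; apply/ffunP => z; rewrite !ffunE ?scK; ring. Qed.

Lemma lact_dualE (a : Aty) (mu : 'Hom(Mty, K^o)) m :
  lact_dual ra a mu m = mu (ra m a).
Proof.
rewrite /lact_dual linfunE' // => c x y /=.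
by rewrite (ra_lin a c x y) linearP.
Qed.
Lemma ract_dualE (a : Aty) (mu : 'Hom(Mty, K^o)) m :
  ract_dual la mu a m = mu (la a m).
Proof.
rewrite /ract_dual linfunE' // => c x y /=.
by rewrite (la_lin a c x y) linearP.
Qed.

Lemma ffz (I : finType) (k : I) : (0 : {ffun I -> K^o}) k = 0.
Proof. exact: ffunE. Qed.

Lemma AlinE (c : K) (x y : Aty) k : (c *: x + y) k = c * x k + y k.
Proof. by rewrite !ffunE. Qed.

Lemma HlinE (c : K) (f g : 'Hom(Mty, K^o)) m : (c *: f + g) m = c * f m + g m.
Proof. by rewrite add_lfunE scale_lfunE. Qed.

Definition LT := Lam Aty Mty.
Definition coordf (b0 : Brr) : 'Hom(Mty, K^o) := linfun (fun m : Mty => m b0).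
Lemma coordfE b0 m : coordf b0 m = m b0.
Proof. by rewrite /coordf linfunE' // => c x y; rewrite !ffunE. Qed.

Definition bL (k : ('I_n.+1 + Arr) + Brr) : LT :=
  match k with inl k' => (dl k' : Aty, 0) | inr b0 => (0, coordf b0) end.
Definition cL (k : ('I_n.+1 + Arr) + Brr) (x : LT) : K :=
  match k with inl k' => x.1 k' | inr b0 => x.2 (dl b0 : Mty) end.
Definition SL p q (k : ('I_n.+1 + Arr) + Brr) : bool :=
  match k with inl k' => SA p q k' | inr b0 => (u b0 == q) && (w b0 == p) end.

Lemma pair_sum (I : finType) (P : pred I) (F : I -> LT) :
  \sum_(i | P i) F i = (\sum_(i | P i) (F i).1, \sum_(i | P i) (F i).2).
Proof.
apply: (big_rec3 (fun a b c => a = (b, c))) => // i a b0 c _ ->.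
by case: (F i).
Qed.

Lemma dimL p q : \dim (cornerL la ra (eid p) (eid q)) =
  #|SL p q|.
Proof.
apply: (@dim_img_coord K LT _ bL cL).
- case=> [k|b0] [l|b1] /=.
  + by rewrite ffunE.
  + exact: ffz.
  + by rewrite zero_lfunE.
  + by rewrite coordfE ffunE eq_sym.
- case=> [k|b0] c x y /=; first exact: AlinE.
  exact: HlinE.
- move=> x; rewrite big_sumType !pair_sum /lam_mul /lam_idem /=.
  congr (_, _).
    rewrite [X in _ + X]big1 ?addr0; last by move=> i _; exact: scaler0.
    exact: cornerA_expand.
  rewrite /= big1 ?add0r; last by move=> i _; exact: scaler0.
  apply/lfunP => m.
  rewrite add_lfunE lact_dualE ract_dualE add_lfunE lact_dualE ract_dualE.
  rewrite !zero_lfunE add0r addr0 sum_lfunE.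
  have -> : ra (la (eid q) m) (eid p) =
      \sum_(i | (u i == q) && (w i == p)) m i *: (dl i : Mty).
    rewrite -ffun_expand; apply/ffunP => z; rewrite !ffunE /=.
    by case: (u z == q); case: (w z == p); rewrite /=; ring.
  rewrite linear_sum; apply: eq_bigr => i _.
  by rewrite linearZ scale_lfunE coordfE /= !scK mulrC.
Qed.

Lemma AeqP (x y : Aty) : (forall l, x l = y l) -> x = y.
Proof. by move=> H; apply/ffunP. Qed.

Lemma card_SL p q : #|SL p q| =
  (#|SA p q| + #|[pred b | (u b == q) && (w b == p)]|)%N.
Proof. by rewrite card_sumpred. Qed.

Lemma eid_mul p q : eid p * eid q = if p == q then eid p else 0.
Proof.
case: (eqVneq p q) => [<-|pq]; apply: AeqP => -[i|a]; rewrite mulE !ffunE ?ffz.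
- by case: (i == p); rewrite /= ?mulr1 ?mulr0.
- by rewrite mulr0 mul0r addr0.
- case: (eqVneq i p) => [ip|]; last by rewrite mul0r.
  by rewrite -ip in pq; rewrite (negbTE pq) mulr0.
- by rewrite mulr0 mul0r addr0.
Qed.

Lemma eid_neq0 p : eid p != 0.
Proof.
apply/eqP => /(congr1 (fun z : Aty => z (inl p))); rewrite ffunE ffz eqxx; apply/eqP.
exact: oner_neq0.
Qed.

Lemma eid_sum : \sum_(p < n.+1) eid p = 1.
Proof.
apply: AeqP => [[i|a]]; rewrite sum_ffunE oneE !ffunE.
  rewrite (bigD1 i) //= ffunE eqxx big1 ?addr0 // => j ji.
  by rewrite ffunE eq_sym (negbTE ji).
by rewrite big1 // => j _; rewrite ffunE.
Qed.

Hypothesis srcneq : forall a, src a != tgt a.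

Lemma eid_prim p : primitive_idem (eid p).
Proof.
split; [by rewrite eid_mul eqxx | exact: eid_neq0 |].
move=> f g ff gg fg gf ef.
have ef1 : eid p * f = f by rewrite ef mulrDl ff gf addr0.
have ef2 : f * eid p = f by rewrite ef mulrDr ff fg addr0.
have fE : f = f (inl p) *: eid p.
  have fe : eid p * f * eid p = f by rewrite ef1 ef2.
  apply: AeqP => l; rewrite -{1}fe corner_pt ffunE ffunE.
  case: l => [i|a] /=.
    by case: (eqVneq i p) => [->|]; rewrite /= ?scK ?mulr1 ?mulr0.
  have -> : (src a == p) && (tgt a == p) = false.
    by apply/negP => /andP [/eqP s /eqP t]; move: (srcneq a); rewrite s t eqxx.
  by rewrite scK mulr0.
have cc : f (inl p) * f (inl p) = f (inl p).
  by rewrite -{3}ff mulE ffunE.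
have : f (inl p) * (f (inl p) - 1) == 0 by rewrite mulrBr mulr1 cc subrr.
rewrite mulf_eq0 subr_eq0 => /orP [/eqP c0|/eqP c1].
  by left; rewrite fE c0 scale0r.
right; move: ef; rewrite fE c1 scale1r -{1}[eid p]addr0 => /addrI <-.
by [].
Qed.

Lemma eid_cpoi : complete_prim_orth_idem eid.
Proof.
split; [exact: eid_prim | | exact: eid_sum].
by move=> i j ij; rewrite eid_mul (negbTE ij).
Qed.
End Alg.
Lemma card_tag_pq n (T_ : 'I_n.+1 * 'I_n.+1 -> finType) p q :
  #|[pred a : {pq & T_ pq} | ((tag a).1 == p) && ((tag a).2 == q)]| = #|T_ (p, q)|.
Proof.
rewrite -(card_image (@eq_from_Tagged _ T_ (p, q))).
apply: eq_card => -[[p' q'] x]; rewrite !inE /=.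
apply/andP/imageP => [[/eqP e1 /eqP e2]|[y _ H]].
  by subst; exists x.
by have := congr1 tag H => -[-> ->].
Qed.

Section Fin.
Variables (n : nat) (B : 'M[int]_n.+1).

Definition cntA (pq : 'I_n.+1 * 'I_n.+1) : nat :=
  if (pq.1 < pq.2)%N then `|B (rev_ord pq.2) (rev_ord pq.1)|%N else 0%N.
Definition cntM (pq : 'I_n.+1 * 'I_n.+1) : nat :=
  if (pq.1 < pq.2)%N then `|B (rev_ord pq.1) (rev_ord pq.2)|%N
  else if pq.1 == pq.2 then (`|B (rev_ord pq.1) (rev_ord pq.1)| - 1)%N else 0%N.

Definition ArrT := {pq : 'I_n.+1 * 'I_n.+1 & 'I_(cntA pq)}.
Definition BrrT := {pq : 'I_n.+1 * 'I_n.+1 & 'I_(cntM pq)}.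
Definition srcT (a : ArrT) := (tag a).1.
Definition tgtT (a : ArrT) := (tag a).2.
Definition uT (a : BrrT) := (tag a).1.
Definition wT (a : BrrT) := (tag a).2.

Lemma srcneqT a : srcT a != tgtT a.
Proof.
case: a => [[p q] [i Hi]]; rewrite /srcT /tgtT /=.
move: Hi; rewrite /cntA /=; case: ifP => [pq _|//].
by apply/eqP => e; rewrite e ltnn in pq.
Qed.

Lemma cardA p q : #|[pred a | (srcT a == p) && (tgtT a == q)]| = cntA (p, q).
Proof. by rewrite -[RHS]card_ord; exact: (card_tag_pq (fun pq => ('I_(cntA pq) : finType))). Qed.
Lemma cardM p q : #|[pred a | (uT a == p) && (wT a == q)]| = cntM (p, q).
Proof. by rewrite -[RHS]card_ord; exact: (card_tag_pq (fun pq => ('I_(cntM pq) : finType))). Qed.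
Hypotheses (Bge0 : forall i j, 0 <= B i j) (Bgt0 : forall i, 0 < B i i).

Lemma rlt (a b : 'I_n.+1) : (rev_ord a < rev_ord b)%N = (b < a)%N.
Proof.
have := ltn_ord a; have := ltn_ord b; rewrite /=.
by case: (b < a)%N / ltnP; move=> H ? ?; apply/idP; lia.
Qed.

Lemma req (a b : 'I_n.+1) : (rev_ord a == rev_ord b) = (a == b).
Proof. exact: (inj_eq rev_ord_inj). Qed.

Lemma trich (i j : 'I_n.+1) :
  [\/ [/\ (i < j)%N, (j < i)%N = false, i == j = false & j == i = false],
      [/\ (i < j)%N = false, (j < i)%N, i == j = false & j == i = false] |
      i = j].
Proof.
case: (ltngtP i j) => h.
- constructor 1; split => //.
    by apply/eqP => e; move: h; rewrite e ltnn.
  by apply/eqP => e; move: h; rewrite e ltnn.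
- constructor 2; split => //.
    by apply/eqP => e; move: h; rewrite e ltnn.
  by apply/eqP => e; move: h; rewrite e ltnn.
- by constructor 3; apply: ord_inj.
Qed.

Lemma entA i j :
  (((rev_ord j == rev_ord i) + cntA (rev_ord j, rev_ord i))%N)%:Z = Bplus B i j.
Proof.
rewrite mxE /cntA /= rlt req !rev_ordK.
have := Bge0 i j; case: (trich i j) => [[h1 h2 h3 h4]|[h1 h2 h3 h4]|<-]; rewrite ?h1 ?h2 ?h3 ?h4 ?eqxx ?ltnn /=; lia.
Qed.

Lemma entM i j : ((cntM (rev_ord j, rev_ord i))%N)%:Z = Bminus B i j.
Proof.
rewrite mxE /cntM /= rlt req !rev_ordK.
have := Bge0 j i; have := Bgt0 i.
case: (trich i j) => [[h1 h2 h3 h4]|[h1 h2 h3 h4]|<-]; rewrite ?h1 ?h2 ?h3 ?h4 ?eqxx ?ltnn /=; lia.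
Qed.

Lemma entL i j :
  ((((rev_ord j == rev_ord i) + cntA (rev_ord j, rev_ord i)) +
     cntM (rev_ord i, rev_ord j))%N)%:Z = B i j.
Proof.
rewrite /cntA /cntM /= !rlt !req !rev_ordK.
have := Bge0 i j; have := Bgt0 i.
case: (trich i j) => [[h1 h2 h3 h4]|[h1 h2 h3 h4]|<-]; rewrite ?h1 ?h2 ?h3 ?h4 ?eqxx ?ltnn /=; lia.
Qed.
End Fin.

Theorem corollary2p22 (K : fieldType) (n : nat) (B : 'M[int]_n) :
  (0 < n)%N ->
  (forall i j : 'I_n, 0 <= B i j) ->
  (forall i : 'I_n, 0 < B i i) ->
  exists (A : falgType K) (e : 'I_n -> A) (M : vectType K)
         (la : A -> M -> M) (ra : M -> A -> M),
    [/\ complete_prim_orth_idem e,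
        triangular_alg e,
        bimod_ax la ra &
        triangular_bimod la ra e] /\
    [/\ cartanA e = Bplus B,
        cartanM la ra e = Bminus B &
        cartanL la ra e = B].
Proof.
case: n B => [//|n] B _ Bge0 Bgt0.
exists (Submission_Aty__canonical__falgebra_Falgebra K (@srcT n B) (@tgtT n B)).
exists (eid K (ArrT B)).
exists (Mty K (BrrT B)).
exists (la (@uT n B)), (ra (@wT n B)).
split; split.
- exact: eid_cpoi (@srcneqT n B).
- split.
    move=> i j ji; apply/eqP; rewrite -dimv_eq0 dimA card_SA cardA /cntA /=.
    case: (trich i j) => [[h1 h2 h3 h4]|[h1 h2 h3 h4]|e]; last by subst; rewrite ltnn in ji.
      by move: ji; rewrite ltnNge ltnW.
    by rewrite h1 h3.
  by move=> i; rewrite dimA card_SA cardA /cntA /= eqxx ltnn.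
- exact: bimod.
- move=> i j ji; apply/eqP; rewrite -dimv_eq0 dimM cardM /cntM /=.
  case: (trich i j) => [[h1 h2 h3 h4]|[h1 h2 h3 h4]|e]; last by subst; rewrite ltnn in ji.
    by move: ji; rewrite ltnNge ltnW.
  by rewrite h1 h3.
- apply/matrixP => i j; rewrite -entA // !mxE dimA card_SA cardA.
  by [].
- apply/matrixP => i j; rewrite -entM // !mxE dimM cardM.
  by [].
- apply/matrixP => i j; rewrite -(entL Bge0 Bgt0 i j) !mxE dimL card_SL card_SA cardA cardM.
  by [].
Qed.
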